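(* Consider the following networked control setting. Let $f_p:\mathbb{R}^{n_p}\times\mathbb{R}^{m_p}\to\mathbb{R}^{n_p}$ with $f_p(0,0)=0$, a closed set $\mathbb{X}_p\subseteq\mathbb{R}^{n_p}$ and a compact set $\mathbb{U}_p\subseteq\mathbb{R}^{m_p}$, both containing the origin, $Q,R>0$, and integers $g\in\mathbb{I}_{\geq1}$, $c\in\mathbb{I}_{\geq g}$, $b\in\mathbb{I}_{\geq c}$ with $q:=\lceil c/g\rceil\geq2$. The overall state is $x=(x_p,u_s,\beta)\in\mathbb{X}:=\mathbb{X}_p\times\mathbb{U}_p\times\mathbb{I}_{[0,b]}$, the input $u=(u_c,\gamma,\delta)\in\mathbb{U}:=\mathbb{U}_p\times\{(\gamma,\delta)\in\{0,1\}^2:\gamma+\delta\leq1\}$, and the dynamics are $x(k+1)=f(x(k),u(k))$ with $$f(x,u)=\big(f_p(x_p,(\gamma+\delta)u_c+(1-\gamma-\delta)u_s),\ (\gamma+\delta)u_c+(1-\gamma-\delta)u_s,\ \min\{\beta+(1-\delta)g-\gamma c,b\}\big).$$ For $\psi>0$ the stage cost is $\ell(x,u)=\|x_p\|_Q^2+(\gamma+\delta)\|u_c\|_R^2+(1-\gamma-\delta)\|u_s\|_R^2+\psi(b^2-\beta^2)$. For $u_c\in\mathbb{U}_p$ define $f_{p,0}(x_p,u_c):=x_p$, $f_{p,i}(x_p,u_c):=f_p(f_{p,i-1}(x_p,u_c),u_c)$. Assume: (A1) there exist a closed set $\mathbb{X}_{f,p}\subseteq\mathbb{X}_p$ containing the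 origin and $k_p:\mathbb{X}_{f,p}\to\mathbb{U}_p$ such that for all $x_p\in\mathbb{X}_{f,p}$: $f_{p,i}(x_p,k_p(x_p))\in\mathbb{X}_p$ for all $i\in\mathbb{I}_{[1,q-1]}$ and $f_{p,q}(x_p,k_p(x_p))\in\mathbb{X}_{f,p}$; moreover $(0,0)\in\operatorname{int}(\mathbb{X}_{f,p}\times\mathbb{U}_p)$; (A2) there is a continuous positive definite $V_{f,p}:\mathbb{X}_{f,p}\to\mathbb{R}$ with, for all $x_p\in\mathbb{X}_{f,p}$, $V_{f,p}(f_{p,q}(x_p,k_p(x_p)))-V_{f,p}(x_p)\leq -q\|k_p(x_p)\|_R^2-\sum_{i=0}^{q-1}\|f_{p,i}(x_p,k_p(x_p))\|_Q^2$; (A4) $\sigma>0$ satisfies $\sigma\geq\psi\big(qb^2-\tfrac16g^2(q-1)(q-2)(2q-3)\big)$. Let $V_f(x):=V_{f,p}(x_p)+\sigma(b^2-\beta^2)$ and $\mathbb{X}_f:=\mathbb{X}_{f,p}\times\mathbb{U}_p\times\mathbb{I}_{[0,b]}$. Fix $r\in\mathbb{I}_{\geq1}$, $M:=rq$, and $N:=JM$ with $J\in\mathbb{I}_{\geq1}$. The closed loop is generated by the rollout scheme: at each $k=jM$, $j\in\mathbb{I}_{\geq0}$, solve $\mathbb{P}(x(jM))$: minimize $\sum_{i=0}^{N-1}\ell(x(i|jM),u(i|jM))+V_f(x(N|jM))$ over $u(0|jM),\dots,u(N-1|jM)$ subject to $x(i+1|jM)=f(x(i|jM),u(i|jM))$,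 $x(i|jM)\in\mathbb{X}$, $u(i|jM)\in\mathbb{U}$ for $i\in\mathbb{I}_{[0,N-1]}$, $x(0|jM)=x(jM)$, $x(N|jM)\in\mathbb{X}_f$, with optimizer $u^*(\cdot|jM)$, and apply $u(jM+i)=u^*(i|jM)$ for $i\in\mathbb{I}_{[0,M-1]}$. Then, if $\mathbb{P}(x(0))$ is feasible, $\mathbb{P}(x(jM))$ is feasible for all $j\in\mathbb{I}_{\geq0}$ and the point $(0,0,b)$ is asymptotically stable for the closed loop.
   Context: $\mathbb{I}$ denotes the integers, $\mathbb{I}_{[a,b]}:=\mathbb{I}\cap[a,b]$, $\mathbb{I}_{\geq a}:=\mathbb{I}\cap[a,\infty)$, $\|v\|_A^2:=v^TAv$, $A>0$ means positive definite, and int denotes the interior. Here $x_p$ is the plant state, $u_s$ the last applied (held) input, $\beta$ the token level of a token bucket (size $b$, rate $g$, cost $c$); $\gamma=1$ is a transmission over the token-bucket-constrained network and $\delta=1$ a transmission over a direct link which consumes no tokens and during which no tokens are added. ''Feasible'' means the constraint set is nonempty. *)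

(* Defs.v *)
From mathcomp Require Import all_boot all_order all_algebra.
From mathcomp Require Import all_classical all_reals all_analysis.
Import Order.TTheory GRing.Theory Num.Theory.
Import numFieldNormedType.Exports.
Local Open Scope ring_scope.
Local Open Scope classical_set_scope.

Definition ceil_div (c g : nat) : nat := `|Num.ceil ((c%:Q) / (g%:Q))|%N.

Set Implicit Arguments.
Unset Strict Implicit.

Section Setting.
Variables (R : realType) (np mp : nat).

Definition qf {n} (Q : 'M[R]_n) (v : 'rV[R]_n) : R := (v *m Q *m v^T) 0 0.

Definition posdef {n} (Q : 'M[R]_n) : Prop :=
  forall v : 'rV[R]_n, v != 0 -> 0 < qf Q v.

Definition state := ('rV[R]_np * 'rV[R]_mp * int)%type.
Definition input := ('rV[R]_mp * bool * bool)%type.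

Definition bR (b : bool) : R := (nat_of_bool b)%:R.

Definition fp_iter (fp : 'rV[R]_np -> 'rV[R]_mp -> 'rV[R]_np) (i : nat)
  (xp : 'rV[R]_np) (uc : 'rV[R]_mp) : 'rV[R]_np :=
  iter i (fun z => fp z uc) xp.

Definition sys_f (fp : 'rV[R]_np -> 'rV[R]_mp -> 'rV[R]_np) (g c b : nat)
  (x : state) (u : input) : state :=
  let: (xp, us, beta) := x in
  let: (uc, gam, del) := u in
  let ua := (bR gam + bR del) *: uc + (1 - bR gam - bR del) *: us in
  (fp xp ua, ua,
   Num.min (beta + (1 - (nat_of_bool del)%:Z) * g%:Z - (nat_of_bool gam)%:Z * c%:Z)
           b%:Z).

Definition stage (Q : 'M[R]_np) (Rm : 'M[R]_mp) (psi : R) (b : nat)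
  (x : state) (u : input) : R :=
  let: (xp, us, beta) := x in
  let: (uc, gam, del) := u in
  qf Q xp + (bR gam + bR del) * qf Rm uc + (1 - bR gam - bR del) * qf Rm us
  + psi * ((b%:R) ^+ 2 - (beta%:~R) ^+ 2).

Definition Vf (Vfp : 'rV[R]_np -> R) (sigma : R) (b : nat) (x : state) : R :=
  Vfp x.1.1 + sigma * ((b%:R) ^+ 2 - (x.2%:~R) ^+ 2).

Definition inX (Xp : set 'rV[R]_np) (Up : set 'rV[R]_mp) (b : nat) (x : state) : Prop :=
  Xp x.1.1 /\ Up x.1.2 /\ (0 <= x.2 <= b%:Z).

Definition inU (Up : set 'rV[R]_mp) (u : input) : Prop :=
  Up u.1.1 /\ ~~ (u.1.2 && u.2).

Definition inXf (Xfp : set 'rV[R]_np) (Up : set 'rV[R]_mp) (b : nat) (x : state) : Prop :=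
  Xfp x.1.1 /\ Up x.1.2 /\ (0 <= x.2 <= b%:Z).

Fixpoint pred_traj (F : state -> input -> state) (x : state) (u : nat -> input)
  (i : nat) : state :=
  match i with
  | 0 => x
  | i'.+1 => F (pred_traj F x u i') (u i')
  end.

Definition ocp_admissible (F : state -> input -> state) (iX : state -> Prop)
  (iU : input -> Prop) (iXf : state -> Prop) (N : nat) (x : state)
  (u : nat -> input) : Prop :=
  (forall i, (i < N)%N -> iX (pred_traj F x u i) /\ iU (u i))
  /\ iXf (pred_traj F x u N).

Definition ocp_cost (F : state -> input -> state) (l : state -> input -> R)
  (Vt : state -> R) (N : nat) (x : state) (u : nat -> input) : R :=
  \sum_(i < N) l (pred_traj F x u i) (u i) + Vt (pred_traj F x u N).

Definition ocp_feasible F iX iU iXf N (x : state) : Prop :=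
  exists u, ocp_admissible F iX iU iXf N x u.

Definition ocp_optimal F iX iU iXf l Vt N (x : state) (u : nat -> input) : Prop :=
  ocp_admissible F iX iU iXf N x u /\
  forall u', ocp_admissible F iX iU iXf N x u' ->
    ocp_cost F l Vt N x u <= ocp_cost F l Vt N x u'.

(* closed loop generated by the rollout scheme: at each k = jM, whenever
   P(x(jM)) is feasible, ucl j is an optimizer u*(.|jM) of P(x(jM)), and
   u(jM+i) = u*(i|jM) is applied for i in [0, M-1]. *)
Definition closed_loop F iX iU iXf l Vt N M (xcl : nat -> state)
  (ucl : nat -> nat -> input) : Prop :=
  (forall j, ocp_feasible F iX iU iXf N (xcl (j * M)%N) ->
             ocp_optimal F iX iU iXf l Vt N (xcl (j * M)%N) (ucl j)) /\
  (forall j i, (i < M)%N ->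
     xcl (j * M + i.+1)%N = F (xcl (j * M + i)%N) (ucl j i)).

Definition eq_dist (b : nat) (x : state) : R :=
  `|x.1.1| + `|x.1.2| + `|((x.2 - b%:Z)%:~R : R)|.

End Setting.

(* Main.v *)
Require Import Defs.
From mathcomp Require Import all_boot all_order all_algebra.
From mathcomp Require Import all_classical all_reals all_analysis.
From mathcomp Require Import zify ring lra.
Import Order.TTheory GRing.Theory Num.Theory.
Import numFieldNormedType.Exports.
Local Open Scope ring_scope.
Local Open Scope classical_set_scope.

Section QF.
Variables (R : realType) (n : nat) (Q : 'M[R]_n).

Lemma qfE (v : 'rV[R]_n) :
  qf Q v = \sum_(j < n) (\sum_(i < n) v 0 i * Q i j) * v 0 j.
Proof.
rewrite /qf !mxE; apply: eq_bigr => j _; rewrite !mxE; congr (_ * _).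
Qed.

Lemma qf_cont : continuous (qf Q).
Proof.
have -> : qf Q = fun v => \sum_(j < n) (\sum_(i < n) v 0 i * Q i j) * v 0 j.
  by apply: funext => v; rewrite qfE.
apply: continuous_big; first exact: add_continuous.
move=> j _ v; apply: continuousM; last exact: coord_continuous.
apply: continuous_big; first exact: add_continuous.
move=> i _ w; apply: continuousM; first exact: coord_continuous.
exact: cst_continuous.
Qed.

Lemma qfZ (t : R) v : qf Q (t *: v) = t ^+ 2 * qf Q v.
Proof.
rewrite /qf -!scalemxAl linearZ /= -scalemxAr mxE mxE.
by rewrite expr2 mulrA.
Qed.

Lemma qf0 : qf Q 0 = 0.
Proof. by rewrite /qf !mul0mx mxE. Qed.

Lemma qf_ge0 : posdef Q -> forall v, 0 <= qf Q v.
Proof.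
move=> pQ v; have [->|nz] := eqVneq v 0; first by rewrite qf0.
exact/ltW/pQ.
Qed.

Lemma qf_small : posdef Q -> forall eps : R, 0 < eps ->
  exists2 eta : R, 0 < eta & forall v, qf Q v < eta -> `|v| < eps.
Proof.
move=> pQ eps eps0.
pose S := [set v : 'rV[R]_n | `|v| = 1].
have [[w Sw]|S0] := pselect (S !=set0); last first.
  exists 1 => // v _.
  have [->|vnz] := eqVneq v 0; first by rewrite normr0.
  exfalso; apply: S0; exists (`|v|^-1 *: v); rewrite /S /= normrZ normrV ?unitfE ?normr_eq0 //.
  by rewrite normr_id mulVf // normr_eq0.
have cS : compact S.
  apply: bounded_closed_compact.
    exists 1; split; first by rewrite num_real.
    move=> x x1 v Sv; rewrite /= Sv; exact: ltW.
  have -> : S = (@Num.norm _ _) @^-1` [set 1] by [].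
  apply: preimage_closed; last exact: closed_eq.
  by move=> x _; exact: norm_continuous.
have [c Sc cmin] := EVT_min_rV (ex_intro _ w Sw) cS (continuous_subspaceT qf_cont).
have Sc' : S c by rewrite inE in Sc.
have cnz : c != 0 by apply/eqP => c0; move: Sc'; rewrite /S /= c0 normr0 => /eqP; rewrite eq_sym oner_eq0.
have lam0 := pQ _ cnz.
exists (qf Q c * eps ^+ 2); first by rewrite mulr_gt0 // exprn_gt0.
move=> v; apply: contraTT; rewrite -!leNgt => epsv.
have vnz : v != 0 by apply/eqP => v0; move: epsv; rewrite v0 normr0 leNgt eps0.
have nv0 : 0 < `|v| by rewrite normr_gt0.
have -> : v = `|v| *: (`|v|^-1 *: v) by rewrite scalerA mulfV ?gt_eqF // scale1r.
rewrite qfZ [_ ^+ 2 * _]mulrC; apply: ler_pM.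
- exact: ltW.
- by rewrite exprn_ge0 // ltW.
- apply: cmin; rewrite inE /S /= normrZ normrV ?unitfE ?gt_eqF //.
  by rewrite normr_id mulVf // gt_eqF.
- by rewrite lerXn2r // ?nnegrE ltW.
Qed.
End QF.

Lemma within_eps (R : realType) n (f : 'rV[R]_n -> R) (A : set 'rV[R]_n) :
  {within A, continuous f} -> A 0 -> forall eta : R, 0 < eta ->
  exists2 d : R, 0 < d & forall x, A x -> `|x| < d -> `|f x - f 0| < eta.
Proof.
move=> cf A0 eta eta0.
have := (subspace_continuousP A f).1 cf 0 A0.
move=> /(_ (ball (f 0) eta) (nbhsx_ballx _ _ eta0)) /nbhs_ballP [e /= e0 H].
exists e => // x Ax xe.
have := H x; rewrite -ball_normE /ball /= sub0r normrN => /(_ xe Ax).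
by rewrite distrC.
Qed.

Lemma interior_prod (R : realType) n m (A : set 'rV[R]_n) (B : set 'rV[R]_m) :
  interior (A `*` B) (0,0) -> exists2 d : R, 0 < d &
    forall x y, `|x| < d -> `|y| < d -> A x /\ B y.
Proof.
rewrite /interior /= => -[[P1 P2] /= [/nbhs_ballP [d1 d10 H1] /nbhs_ballP [d2 d20 H2]] sub].
exists (Num.min d1 d2); first by rewrite lt_min d10 d20.
move=> x y; rewrite !lt_min => /andP [x1 x2] /andP [y1 y2].
have : (P1 `*` P2) (x, y).
  split; [apply: H1|apply: H2]; by rewrite -ball_normE /ball /= sub0r normrN.
by move/sub.
Qed.

Lemma ceil_div_lt (c g : nat) : (0 < g)%N -> (0 < c)%N ->
  ((ceil_div c g).-1 * g < c)%N.
Proof.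
move=> g0 c0; rewrite /ceil_div.
set x : rat := c%:Q / g%:Q.
have x0 : 0 <= x by rewrite divr_ge0 // ler0n.
have cge : 0 <= Num.ceil x by rewrite ceil_ge0 (lt_le_trans _ x0).
have := ceilB1_lt x.
have -> : Num.ceil x = (`|Num.ceil x|%N)%:Z by rewrite gez0_abs.
case: (`|Num.ceil x|%N) => [|k] /=; first by rewrite mul0n.
rewrite -[k.+1]addn1 PoszD addrK ltr_pdivlMr ?ltr0n // => h.
rewrite -(ltr_nat rat) natrM; exact: h.
Qed.

Section Generic.
Variables (R : realType) (np mp : nat).
Let S := state R np mp.
Let I := input R mp.
Variables (F : S -> I -> S) (l : S -> I -> R) (Vt : S -> R)
  (iX : S -> Prop) (iU : I -> Prop) (iXf : S -> Prop).

Definition concat (u : nat -> I) (n : nat) (v : nat -> I) : nat -> I :=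
  fun i => if (i < n)%N then u i else v (i - n)%N.

Lemma traj_concat_le x u n v i : (i <= n)%N ->
  pred_traj F x (concat u n v) i = pred_traj F x u i.
Proof.
elim: i => [//|i IH] lt /=; rewrite IH ?(ltnW lt) //.
by rewrite /concat lt.
Qed.

Lemma traj_concat_add x u n v k :
  pred_traj F x (concat u n v) (n + k) = pred_traj F (pred_traj F x u n) v k.
Proof.
elim: k => [|k IH]; first by rewrite addn0 traj_concat_le.
rewrite addnS /= IH /concat ltnNge leq_addr /=.
by rewrite addKn.
Qed.

Lemma traj_shift x u n k :
  pred_traj F x u (n + k) = pred_traj F (pred_traj F x u n) (fun i => u (n + i)%N) k.
Proof. by elim: k => [|k IH]; rewrite ?addn0 // addnS /= IH. Qed.

Lemma adm_concat n k x u v :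
  (forall i, (i < n)%N -> iX (pred_traj F x u i) /\ iU (u i)) ->
  ocp_admissible F iX iU iXf k (pred_traj F x u n) v ->
  ocp_admissible F iX iU iXf (n + k) x (concat u n v).
Proof.
move=> H1 [H2 H3]; split; last by rewrite traj_concat_add.
move=> i ilt; case: (ltnP i n) => lin.
  by rewrite traj_concat_le ?(ltnW lin) // /concat lin; apply: H1.
have -> : i = (n + (i - n))%N by rewrite subnKC.
rewrite traj_concat_add /concat ltnNge leq_addr /= addKn.
by apply: H2; rewrite -(ltn_add2l n) subnKC.
Qed.

Lemma cost_concat n k x u v :
  ocp_cost F l Vt (n + k) x (concat u n v) =
  \sum_(i < n) l (pred_traj F x u i) (u i) + ocp_cost F l Vt k (pred_traj F x u n) v.
Proof.
rewrite /ocp_cost big_split_ord /= addrA traj_concat_add; congr (_ + _ + _).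
  apply: eq_bigr => i _ /=; by rewrite traj_concat_le ?(ltnW (ltn_ord i)) // /concat ltn_ord.
apply: eq_bigr => i _ /=; rewrite traj_concat_add /concat ltnNge leq_addr /=.
by rewrite addKn.
Qed.

Lemma adm_shift n k x u :
  ocp_admissible F iX iU iXf (n + k) x u ->
  ocp_admissible F iX iU iXf k (pred_traj F x u n) (fun i => u (n + i)%N).
Proof.
move=> [H1 H2]; split; last by rewrite -traj_shift.
move=> i ilt; rewrite -traj_shift; apply: H1; by rewrite ltn_add2l.
Qed.

Lemma adm_prefix n k x u :
  ocp_admissible F iX iU iXf (n + k) x u ->
  forall i, (i < n)%N -> iX (pred_traj F x u i) /\ iU (u i).
Proof. by move=> [H1 _] i ilt; apply: H1; apply: leq_trans ilt (leq_addr _ _). Qed.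

Lemma cost_shift n k x u :
  ocp_cost F l Vt (n + k) x u =
  \sum_(i < n) l (pred_traj F x u i) (u i) +
  ocp_cost F l Vt k (pred_traj F x u n) (fun i => u (n + i)%N).
Proof.
rewrite /ocp_cost big_split_ord /= addrA traj_shift; congr (_ + _ + _).
by apply: eq_bigr => i _ /=; rewrite traj_shift.
Qed.

Lemma block_chain q :
  (forall y, iXf y -> exists w, ocp_admissible F iX iU iXf q y w /\
                               ocp_cost F l Vt q y w <= Vt y) ->
  forall m y, iXf y -> exists w, ocp_admissible F iX iU iXf (m * q) y w /\
                               ocp_cost F l Vt (m * q) y w <= Vt y.
Proof.
move=> Hb; elim => [|m IH] y Xy.
  have [w _] := Hb y Xy; exists w; split.
    by split => //.
  by rewrite /ocp_cost mul0n big_ord0 add0r.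
have [w1 [A1 C1]] := Hb y Xy.
have [w2 [A2 C2]] := IH _ A1.2.
exists (concat w1 q w2); rewrite mulSn; split.
  by apply: adm_concat => //; case: A1.
rewrite cost_concat; apply: le_trans C1.
by rewrite /ocp_cost lerD2l.
Qed.

End Generic.

Definition mtok (g b : nat) (be : int) (i : nat) : int := Num.min (be + i%:Z * g%:Z) b%:Z.

Lemma sum_sq (R : realType) n :
  6 * \sum_(i < n) (i%:R : R) ^+ 2 = (n%:R - 1) * n%:R * (2 * n%:R - 1).
Proof.
elim: n => [|n IH]; first by rewrite big_ord0 mulr0 mulr0 mul0r.
rewrite big_ord_recr /= mulrDr IH -natr1.
ring.
Qed.

Section Token.
Variables (R : realType) (g c b q' : nat) (psi sigma : R).
Hypotheses (Hg : (1 <= g)%N) (Hcb : (c <= b)%N) (Hq : (1 <= q')%N)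
  (Hqc : (q' * g < c)%N) (psi0 : 0 < psi) (sig0 : 0 < sigma)
  (HA4 : psi * (q'.+1%:R * (b%:R) ^+ 2
         - 6^-1 * (g%:R) ^+ 2 * (q'.+1%:R - 1) * (q'.+1%:R - 2) * (2 * q'.+1%:R - 3))
    <= sigma).


Lemma token (be : int) : 0 <= be <= b%:Z ->
  psi * ((b%:R : R) ^+ 2 - (be%:~R) ^+ 2) +
  \sum_(i < q') psi * ((b%:R : R) ^+ 2 - ((mtok g b be i)%:~R) ^+ 2)
  <= sigma * (((mtok g b be q')%:~R : R) ^+ 2 - (be%:~R) ^+ 2).
Proof.
move=> /andP [be0 beb].
have [beq|bel] := eqVneq be b%:Z.
  have mb i : mtok g b be i = b%:Z by rewrite /mtok beq; lia.
  rewrite big1 => [|i _]; last by rewrite mb subrr mulr0.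
  by rewrite mb beq subrr !mulr0 addr0.
have bel' : be < b%:Z by rewrite lt_neqAle bel beb.
have mq : be + 1 <= mtok g b be q' by rewrite /mtok; lia.
have mi (i : 'I_q') : (i%:Z * g%:Z) <= mtok g b be i /\ 0 <= i%:Z * g%:Z.
  have := leq_mul (ltnW (ltn_ord i)) (leqnn g); rewrite /mtok; nia.
have R1 : sigma <= sigma * (((mtok g b be q')%:~R : R) ^+ 2 - (be%:~R) ^+ 2).
  rewrite -{1}[sigma]mulr1 ler_pM2l //.
  have h1 : (be%:~R : R) + 1 <= (mtok g b be q')%:~R by rewrite -[1]/(1%:~R) -intrD ler_int.
  have h2 : (0 : R) <= be%:~R by rewrite ler0z.
  nra.
apply: le_trans R1; apply: le_trans HA4; rewrite -mulr_sumr -mulrDr ler_pM2l //.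
have S1 : \sum_(i < q') ((b%:R : R) ^+ 2 - ((mtok g b be i)%:~R) ^+ 2) <=
          \sum_(i < q') ((b%:R : R) ^+ 2 - (i%:R * g%:R) ^+ 2).
  apply: ler_sum => i _; rewrite lerD2l lerN2.
  have [h1 h2] := mi i.
  have h1' : (i%:R * g%:R : R) <= (mtok g b be i)%:~R.
    by rewrite -[(i%:R : R)]/((i%:Z)%:~R) -[(g%:R : R)]/((g%:Z)%:~R) -intrM ler_int.
  have h2' : (0 : R) <= i%:R * g%:R by rewrite mulr_ge0.
  nra.
have S2 : \sum_(i < q') ((b%:R : R) ^+ 2 - (i%:R * g%:R) ^+ 2) =
  q'%:R * (b%:R) ^+ 2 - (g%:R) ^+ 2 * \sum_(i < q') (i%:R : R) ^+ 2.
  rewrite sumrB sumr_const card_ord mulr_natl; congr (_ - _).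
  by rewrite mulr_sumr; apply: eq_bigr => i _; rewrite exprMn mulrC.
have S3 := sum_sq R q'.
have h0 : (0 : R) <= (be%:~R) ^+ 2 by rewrite sqr_ge0.
move: S1; rewrite S2 => S1.
rewrite -natr1.
set s := \sum_(i < q') (i%:R : R) ^+ 2 in S1 S3.
have -> : (q'%:R + 1 - 1 : R) = q'%:R by ring.
have -> : (q'%:R + 1 - 2 : R) = q'%:R - 1 by ring.
have -> : (2 * (q'%:R + 1) - 3 : R) = 2 * q'%:R - 1 by ring.
have e : 6^-1 * (g%:R : R) ^+ 2 * q'%:R * (q'%:R - 1) * (2 * q'%:R - 1) = (g%:R) ^+ 2 * s.
  have s6 : s = 6^-1 * ((q'%:R - 1) * q'%:R * (2 * q'%:R - 1)).
    have h6 : (6:R) != 0 by apply/eqP; lra.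
    by rewrite -S3 mulKf.
  rewrite s6; ring.
rewrite e; lra.
Qed.
End Token.

Section Spec.
Variables (R : realType) (np mp : nat) (fp : 'rV[R]_np -> 'rV[R]_mp -> 'rV[R]_np)
  (Xp : set 'rV[R]_np) (Up : set 'rV[R]_mp) (Q : 'M[R]_np) (Rm : 'M[R]_mp)
  (g c b : nat) (psi sigma : R) (Xfp : set 'rV[R]_np)
  (kp : 'rV[R]_np -> 'rV[R]_mp) (Vfp : 'rV[R]_np -> R).

Let F := sys_f fp g c b.

Definition term_u (xp : 'rV[R]_np) : nat -> input R mp :=
  fun i => (kp xp, false, i == 0%N).

Lemma term_traj (x : state R np mp) j : 0 <= x.2 <= b%:Z ->
  pred_traj F x (term_u x.1.1) j.+1 =
  (fp_iter fp j.+1 x.1.1 (kp x.1.1), kp x.1.1, mtok g b x.2 j).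
Proof.
case: x => [[xp us] be] /= /andP [be0 beb].
elim: j => [|j IH].
  rewrite /= /F /sys_f /term_u /= /bR /= mulr1n add0r subr0 subrr scale1r scale0r addr0.
  congr (_, _, _); rewrite /mtok; lia.
rewrite [LHS]/= IH /F /sys_f /term_u /= /bR /= add0r !subr0 scale0r add0r scale1r.
congr (_, _, _); rewrite /mtok; lia.
Qed.

Lemma stageE (x : state R np mp) (u : input R mp) : ~~ (u.1.2 && u.2) ->
  stage Q Rm psi b x u =
  qf Q x.1.1 + qf Rm (F x u).1.2 + psi * ((b%:R) ^+ 2 - (x.2%:~R) ^+ 2).
Proof.
case: x => [[xp us] be]; case: u => [[uc [] []]] //= _;
  rewrite /F /sys_f /bR /= ?mulr1n ?addr0 ?add0r ?subr0 ?subrr ?scale1r ?scale0r ?addr0 ?add0r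
    ?mul1r ?mul0r ?addr0 ?add0r //.
Qed.

Hypotheses (q' : nat) (Hg : (1 <= g)%N) (Hcb : (c <= b)%N) (Hq : (1 <= q')%N)
  (Hqc : (q' * g < c)%N) (psi0 : 0 < psi) (sig0 : 0 < sigma)
  (HA4 : psi * (q'.+1%:R * (b%:R) ^+ 2
         - 6^-1 * (g%:R) ^+ 2 * (q'.+1%:R - 1) * (q'.+1%:R - 2) * (2 * q'.+1%:R - 3))
    <= sigma)
  (Xfsub : Xfp `<=` Xp) (kpU : forall xp, Xfp xp -> Up (kp xp))
  (HA1 : forall xp, Xfp xp ->
     (forall i, (1 <= i <= q'.+1.-1)%N -> Xp (fp_iter fp i xp (kp xp))) /\
     Xfp (fp_iter fp q'.+1 xp (kp xp)))
  (HA2 : forall xp, Xfp xp ->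
     Vfp (fp_iter fp q'.+1 xp (kp xp)) - Vfp xp <=
       - (q'.+1%:R * qf Rm (kp xp)) - \sum_(i < q'.+1) qf Q (fp_iter fp i xp (kp xp))).

Let iX := inX Xp Up b.
Let iU := inU Up.
Let iXf := inXf Xfp Up b.
Let l := stage (np:=np) (mp:=mp) Q Rm psi b.
Let Vt := Vf (np:=np) (mp:=mp) Vfp sigma b.

Lemma term_block (x : state R np mp) : iXf x ->
  ocp_admissible F iX iU iXf q'.+1 x (term_u x.1.1) /\
  (ocp_cost F l Vt q'.+1 x (term_u x.1.1) <= Vt x).
Proof.
case: x => [[xp us] be] [/= Xf [/= Uus /= /andP[be0 beb]]].
have rng : 0 <= (xp, us, be).2 <= b%:Z by rewrite /= be0 beb.
have Tr j : pred_traj F (xp, us, be) (term_u xp) j.+1 =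
  (fp_iter fp j.+1 xp (kp xp), kp xp, mtok g b be j) := term_traj (xp, us, be) j rng.
have [HA1a HA1b] := HA1 _ Xf.
change (term_u (xp, us, be).1.1) with (term_u xp).
split.
  split.
    move=> [|j] jlt.
      split; first by split; [exact: Xfsub|split=> //=; rewrite be0 beb].
      by split => //=; exact: kpU.
    rewrite Tr; split; last by split => //=; exact: kpU.
    split; first by apply: HA1a => /=; lia.
    split; first exact: kpU.
    by rewrite /= /mtok; lia.
  rewrite Tr; split; first exact: HA1b.
  split; first exact: kpU.
  by rewrite /= /mtok; lia.
have l0 : l (xp, us, be) (term_u xp 0) =
    qf Q xp + qf Rm (kp xp) + psi * ((b%:R) ^+ 2 - (be%:~R) ^+ 2).
  rewrite /l stageE //.
  by rewrite -[F (xp, us, be) (term_u xp 0)]/(pred_traj F (xp, us, be) (term_u xp) 1) Tr.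
have lS j : l (pred_traj F (xp, us, be) (term_u xp) j.+1) (term_u xp j.+1) =
    qf Q (fp_iter fp j.+1 xp (kp xp)) + qf Rm (kp xp) +
    psi * ((b%:R) ^+ 2 - ((mtok g b be j)%:~R) ^+ 2).
  rewrite /l stageE //.
  by rewrite -[F (pred_traj F (xp, us, be) (term_u xp) j.+1) (term_u xp j.+1)]/(pred_traj F (xp, us, be) (term_u xp) j.+2) !Tr.
rewrite /ocp_cost Tr big_ord_recl l0.
under eq_bigr => i _ do rewrite lift0 lS.
have E : \sum_(i < q') (qf Q (fp_iter fp i.+1 xp (kp xp)) + qf Rm (kp xp) +
    psi * ((b%:R) ^+ 2 - ((mtok g b be i)%:~R) ^+ 2)) =
  \sum_(i < q') qf Q (fp_iter fp i.+1 xp (kp xp)) + q'%:R * qf Rm (kp xp) +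
  \sum_(i < q') psi * ((b%:R) ^+ 2 - ((mtok g b be i)%:~R) ^+ 2).
  by rewrite !big_split /= sumr_const card_ord mulr_natl.
rewrite E /Vt /Vf.
change ((fp_iter fp q'.+1 xp (kp xp), kp xp, mtok g b be q').1.1) with (fp_iter fp q'.+1 xp (kp xp)).
change ((fp_iter fp q'.+1 xp (kp xp), kp xp, mtok g b be q').2) with (mtok g b be q').
change ((xp, us, be).1.1) with xp; change ((xp, us, be).2) with be.
have H2 := HA2 _ Xf; rewrite big_ord_recl in H2.
rewrite (eq_bigr (fun i : 'I_q' => qf Q (fp_iter fp i.+1 xp (kp xp)))) in H2; last first.
  by move=> i _; rewrite lift0.
change (fp_iter fp (nat_of_ord (@ord0 q')) xp (kp xp)) with xp in H2.
have Tk := @token R g c b q' psi sigma Hg Hcb Hq Hqc psi0 sig0 HA4 be.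
rewrite be0 beb in Tk; have {}Tk := Tk isT.
set A := \sum_(i < q') qf Q _ in H2 *.
set B := \sum_(i < q') psi * _ in Tk *.
rewrite -natr1 in H2.

lra.
Qed.
End Spec.

Arguments traj_concat_le {R np mp F x u n v i}.
Arguments traj_concat_add {R np mp F} x u n v k.
Arguments traj_shift {R np mp F} x u n k.
Arguments adm_concat {R np mp F iX iU iXf n k x u v}.
Arguments cost_concat {R np mp F l Vt} n k x u v.
Arguments adm_shift {R np mp F iX iU iXf n k x u}.
Arguments adm_prefix {R np mp F iX iU iXf n k x u}.
Arguments cost_shift {R np mp F l Vt} n k x u.
Arguments block_chain {R np mp F l Vt iX iU iXf q}.
Arguments qf_small {R n Q}.
Arguments qf_ge0 {R n Q} _ v.
Arguments within_eps {R n f A}.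
Arguments interior_prod {R n m A B}.
Arguments stageE {R np mp fp Q Rm g c b psi} x u.

Lemma sum_mono (R : realType) (f : nat -> R) n m : (forall k, 0 <= f k) -> (n <= m)%N ->
  \sum_(k < n) f k <= \sum_(k < m) f k.
Proof.
move=> f0 /subnK <-; elim: (m - n)%N => [|d IH]; first by rewrite add0n.
by rewrite addSn big_ord_recr /= ler_wpDr.
Qed.

Lemma sum_ge_term (R : realType) (f : nat -> R) n i : (forall k, (k < n)%N -> 0 <= f k) ->
  (i < n)%N -> f i <= \sum_(k < n) f k.
Proof.
move=> f0 ilt; rewrite (bigD1 (Ordinal ilt)) //= ler_wpDr //.
by apply: sumr_ge0 => k _; apply: f0.
Qed.

Lemma int_eq_b (R : realType) (b : nat) (be : int) (psi : R) : (1 <= b)%N -> 0 < psi ->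
  0 <= be <= b%:Z -> psi * ((b%:R : R) ^+ 2 - (be%:~R) ^+ 2) < psi -> be = b%:Z.
Proof.
move=> b1 psi0 /andP [be0 beb] h; apply/eqP; apply: contraTT h => neq.
rewrite -leNgt -{1}[psi]mulr1 ler_pM2l //.
have h1 : (1 <= (b%:Z) ^+ 2 - be ^+ 2)%R.
  have h2 : be < b%:Z by rewrite lt_neqAle neq beb.
  nia.
have : (1%:~R : R) <= ((b%:Z) ^+ 2 - be ^+ 2)%:~R by rewrite ler_int.
by rewrite rmorphB /= !rmorphXn /= => h; exact: h.
Qed.

Lemma lt3 (R : realType) (a b c d : R) : 0 <= a -> 0 <= b -> 0 <= c -> a + b + c < d ->
  [/\ a < d, b < d & c < d].
Proof. move=> *; split; lra. Qed.

Lemma int_abs_lt1 (R : realType) (z : int) : `|(z%:~R : R)| < 1 -> z = 0.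
Proof.
rewrite -intr_norm -[1]/(1%:~R) ltr_int => h; apply/eqP.
by rewrite -normr_eq0; move: h; lia.
Qed.

Lemma sum3 (R : realType) (a c e : R) : a < e / 3 -> c < e / 3 -> 0 < e -> a + c < e.
Proof. move=> *; lra. Qed.

Lemma sdec_arith (R : realType) (a b c : R) : 0 <= a -> 0 <= b -> 0 <= c ->
  [/\ a <= a + b + c, b <= a + b + c & c <= a + b + c].
Proof. move=> *; split; lra. Qed.


Theorem theorem3 (R : realType) (np mp : nat)
  (fp : 'rV[R]_np -> 'rV[R]_mp -> 'rV[R]_np)
  (Xp : set 'rV[R]_np) (Up : set 'rV[R]_mp)
  (Q : 'M[R]_np) (Rm : 'M[R]_mp)
  (g c b : nat) (psi : R)
  (Xfp : set 'rV[R]_np) (kp : 'rV[R]_np -> 'rV[R]_mp) (Vfp : 'rV[R]_np -> R)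
  (sigma : R) (r J : nat) :
  let q := ceil_div c g in
  fp 0 0 = 0 ->
  closed Xp -> Xp 0 -> compact Up -> Up 0 ->
  posdef Q -> posdef Rm ->
  (1 <= g)%N -> (g <= c)%N -> (c <= b)%N -> (2 <= q)%N ->
  0 < psi ->
  (* (A1) *)
  closed Xfp -> Xfp `<=` Xp -> Xfp 0 ->
  (forall xp, Xfp xp -> Up (kp xp)) ->
  (forall xp, Xfp xp ->
     (forall i, (1 <= i <= q.-1)%N -> Xp (fp_iter fp i xp (kp xp))) /\
     Xfp (fp_iter fp q xp (kp xp))) ->
  interior (Xfp `*` Up) (0, 0) ->
  (* (A2) *)
  {within Xfp, continuous Vfp} ->
  Vfp 0 = 0 -> (forall xp, Xfp xp -> xp != 0 -> 0 < Vfp xp) ->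
  (forall xp, Xfp xp ->
     Vfp (fp_iter fp q xp (kp xp)) - Vfp xp <=
       - (q%:R * qf Rm (kp xp)) - \sum_(i < q) qf Q (fp_iter fp i xp (kp xp))) ->
  (* (A4) *)
  0 < sigma ->
  psi * (q%:R * (b%:R) ^+ 2
         - 6^-1 * (g%:R) ^+ 2 * (q%:R - 1) * (q%:R - 2) * (2 * q%:R - 3))
    <= sigma ->
  (1 <= r)%N -> (1 <= J)%N ->
  let M := (r * q)%N in
  let N := (J * M)%N in
  let F := sys_f fp g c b in
  let iX := inX Xp Up b in
  let iU := inU Up in
  let iXf := inXf Xfp Up b in
  let l := stage Q Rm psi b in
  let Vt := Vf Vfp sigma b in
  let feas := ocp_feasible F iX iU iXf N in
  let CL := closed_loop F iX iU iXf l Vt N M in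
  (* recursive feasibility *)
  (forall xcl ucl, CL xcl ucl -> feas (xcl 0%N) ->
     forall j, feas (xcl (j * M)%N)) /\
  (* stability of (0,0,b) *)
  (forall eps : R, 0 < eps -> exists del : R, 0 < del /\
     forall xcl ucl, CL xcl ucl -> feas (xcl 0%N) ->
       eq_dist b (xcl 0%N) < del -> forall k, eq_dist b (xcl k) < eps) /\
  (* attractivity of (0,0,b) *)
  (forall xcl ucl, CL xcl ucl -> feas (xcl 0%N) ->
     (fun k => eq_dist b (xcl k)) @ \oo --> (0 : R)).
Proof.
move=> q fp0 cXp Xp0 cUp Up0 pQ pR Hg Hgc Hcb Hq2 psi0 cXf Xfsub Xf0 kpU HA1 Hint
  cV V0 Vpos HA2 sig0 HA4 Hr HJ M N F iX iU iXf l Vt feas CL.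
have qE : q = q.-1.+1 by rewrite prednK // (leq_trans _ Hq2).
have Hqc : (q.-1 * g < c)%N by apply: ceil_div_lt => //; apply: leq_trans Hgc.
have M0 : (0 < M)%N by rewrite /M muln_gt0 Hr (leq_trans _ Hq2).
have TB : forall x, iXf x -> exists w, ocp_admissible F iX iU iXf q x w /\
                                    (ocp_cost F l Vt q x w <= Vt x).
  move=> x Xx; exists (term_u _ _ _ kp x.1.1).
  move: HA1 HA2 HA4 Hq2; rewrite qE => HA1' HA2' HA4' Hq2'.
  have Hq1 : (1 <= q.-1)%N by rewrite -ltnS.
  exact: (@term_block R np mp fp Xp Up Q Rm g c b psi sigma Xfp kp Vfp q.-1
    Hg Hcb Hq1 Hqc psi0 sig0 HA4' Xfsub kpU HA1' HA2' x Xx).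
have BC := block_chain TB.
have l_ge0 : forall x u, iX x -> iU u -> 0 <= l x u.
  move=> [[xp us] be] [[uc ga] de] [_ [_ /andP [be0 beb]]] [_ gd].
  rewrite /l (stageE (fp:=fp) (g:=g) (c:=c) (xp, us, be) (uc, ga, de) gd) /=.
  apply: addr_ge0; first by apply: addr_ge0; apply: qf_ge0.
  apply: mulr_ge0; first exact: ltW.
  rewrite subr_ge0 lerXn2r ?nnegrE ?ler0n ?ler0z //.
  by rewrite -[(b%:R : R)]/((b%:Z)%:~R) ler_int.
have Vfp_ge0 : forall xp, Xfp xp -> 0 <= Vfp xp.
  move=> xp Xxp; have [->|nz] := eqVneq xp 0; first by rewrite V0.
  exact/ltW/Vpos.
have Vt_ge0 : forall x, iXf x -> 0 <= Vt x.
  move=> [[xp us] be] [/= Xxp [_ /andP [be0 beb]]]; rewrite /Vt /Vf /=.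
  apply: addr_ge0; first exact: Vfp_ge0.
  apply: mulr_ge0; first exact: ltW.
  rewrite subr_ge0 lerXn2r ?nnegrE ?ler0n ?ler0z //.
  by rewrite -[(b%:R : R)]/((b%:Z)%:~R) ler_int.
have cost_ge : forall x u, ocp_admissible F iX iU iXf N x u ->
    0 <= ocp_cost F l Vt N x u /\
    forall i, (i < N)%N -> l (pred_traj F x u i) (u i) <= ocp_cost F l Vt N x u.
  move=> x u [A1 A2].
  have f0 : forall k, (k < N)%N -> 0 <= l (pred_traj F x u k) (u k).
    by move=> k /A1 [] ; apply: l_ge0.
  have s0 : 0 <= \sum_(k < N) l (pred_traj F x u k) (u k).
    by apply: sumr_ge0 => k _; apply: f0.
  split; first by apply: addr_ge0 => //; apply: Vt_ge0.
  move=> i ilt; rewrite /ocp_cost.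
  apply: le_trans (@sum_ge_term R (fun k => l (pred_traj F x u k) (u k)) N i f0 ilt) _.
  by rewrite lerDl; exact: Vt_ge0 _ A2.
have NM : (M <= N)%N by rewrite /N leq_pmull.
pose k := (N - M)%N.
have NE1 : N = (M + k)%N by rewrite /k subnKC.
have NE2 : N = (k + M)%N by rewrite addnC.
have step : forall x u, ocp_admissible F iX iU iXf N x u ->
   exists u', ocp_admissible F iX iU iXf N (pred_traj F x u M) u' /\
   ocp_cost F l Vt N (pred_traj F x u M) u' +
     \sum_(i < M) l (pred_traj F x u i) (u i) <= ocp_cost F l Vt N x u.
  move=> x u Ad.
  have Ad1 : ocp_admissible F iX iU iXf (M + k) x u by rewrite -NE1.
  have As := adm_shift Ad1.
  set x' := pred_traj F x u M in As *.
  set us := (fun i => u (M + i)%N) in As.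
  have [w [Aw Cw]] := BC r _ As.2.
  exists (concat _ _ us k w); split.
    rewrite NE2; apply: adm_concat; first by case: As.
    by rewrite /M; exact: Aw.
  have E1 : ocp_cost F l Vt N x' (concat _ _ us k w) =
     \sum_(i < k) l (pred_traj F x' us i) (us i) +
     ocp_cost F l Vt M (pred_traj F x' us k) w by rewrite NE2 cost_concat.
  have E2 : ocp_cost F l Vt N x u = \sum_(i < M) l (pred_traj F x u i) (u i) +
     ocp_cost F l Vt k x' us by rewrite NE1 cost_shift.
  rewrite E1 E2; change (r * q)%N with M in Cw.
  move: Cw; rewrite /ocp_cost; lra.
clear NE1 NE2 k.
have traj_cl : forall xcl ucl, CL xcl ucl -> forall j i, (i <= M)%N ->
    xcl (j * M + i)%N = pred_traj F (xcl (j * M)%N) (ucl j) i.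
  move=> xcl ucl [_ h2] j; elim=> [|i IH] iM; first by rewrite addn0.
  by rewrite h2 // IH // ltnW.
have feas_all : forall xcl ucl, CL xcl ucl -> feas (xcl 0%N) ->
    forall j, feas (xcl (j * M)%N).
  move=> xcl ucl hCL f0; elim=> [|j IH]; first by rewrite mul0n.
  have [Ad _] := hCL.1 j IH.
  have [u' [Au' _]] := step _ _ Ad.
  by exists u'; rewrite mulSnr (traj_cl _ _ hCL).
have facts : forall xcl ucl, CL xcl ucl -> feas (xcl 0%N) ->
  let s := fun k => l (xcl k) (ucl (k %/ M)%N (k %% M)%N) in
  let Vz := ocp_cost F l Vt N (xcl 0%N) (ucl 0%N) in
  [/\ forall k, iX (xcl k) /\ iU (ucl (k %/ M)%N (k %% M)%N),
      forall k, 0 <= s k /\ s k <= Vz,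
      forall k, xcl k.+1 = F (xcl k) (ucl (k %/ M)%N (k %% M)%N) &
      forall n, \sum_(k < n) s k <= Vz].
  move=> xcl ucl hCL f0 s Vz.
  have FA := feas_all _ _ hCL f0.
  pose V j := ocp_cost F l Vt N (xcl (j * M)%N) (ucl j).
  have adm j : ocp_admissible F iX iU iXf N (xcl (j * M)%N) (ucl j).
    by have [] := hCL.1 j (FA j).
  have decr j : V j.+1 + \sum_(i < M) l (xcl (j * M + i)%N) (ucl j i) <= V j.
    have [u' [Au' Cu']] := step _ _ (adm j).
    have Hopt := (hCL.1 j.+1 (FA j.+1)).2 u'.
    have e : xcl (j.+1 * M)%N = pred_traj F (xcl (j * M)%N) (ucl j) M.
      by rewrite mulSnr (traj_cl _ _ hCL).
    rewrite -e in Au' Cu'; have {}Hopt := Hopt Au'.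
    apply: le_trans Cu'; apply: lerD; first exact: Hopt.
    by apply: ler_sum => i _; rewrite (traj_cl _ _ hCL) // ltnW.
  have Vge0 j : 0 <= V j by have [] := cost_ge _ _ (adm j).
  have sumM_ge0 j : 0 <= \sum_(i < M) l (xcl (j * M + i)%N) (ucl j i).
    apply: sumr_ge0 => i _; rewrite (traj_cl _ _ hCL _ _ (ltnW (ltn_ord i))).
    have [h _] := adm j; have [] := h i (leq_trans (ltn_ord i) NM).
    exact: l_ge0.
  have VleVz j : V j <= Vz.
    elim: j => [|j IH]; first by rewrite /V mul0n.
    apply: le_trans IH; apply: le_trans (decr j); rewrite lerDl; exact: sumM_ge0.
  have kdec t : exists j i, (i < M)%N /\ t = (j * M + i)%N /\
      (t %/ M)%N = j /\ (t %% M)%N = i.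
    exists (t %/ M)%N, (t %% M)%N; split; first by rewrite ltn_pmod.
    by split => //; rewrite -divn_eq.
  have sE j i : (i < M)%N -> s (j * M + i)%N = l (xcl (j * M + i)%N) (ucl j i).
    move=> iM.
    have e1 : ((j * M + i) %/ M)%N = j by rewrite divnMDl // divn_small // addn0.
    have e2 : ((j * M + i) %% M)%N = i by rewrite modnMDl modn_small.
    by rewrite /s e1 e2.
  have XU : forall k, iX (xcl k) /\ iU (ucl (k %/ M)%N (k %% M)%N).
    move=> t; have [j [i [iM [tE [jE iE]]]]] := kdec t.
    rewrite jE iE tE (traj_cl _ _ hCL _ _ (ltnW iM)); have [h _] := adm j; exact: h (leq_trans iM NM).
  split => //.
  - move=> k; split; first by have [] := XU k; exact: l_ge0.
    have [j [i [iM [kE [jE iE]]]]] := kdec k.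
    rewrite /s jE iE kE (traj_cl _ _ hCL _ _ (ltnW iM)).
    apply: le_trans (VleVz j).
    by have [_ ] := cost_ge _ _ (adm j); apply; exact: leq_trans iM NM.
  - move=> k; have [j [i [iM [kE [jE iE]]]]] := kdec k.
    by rewrite jE iE kE -addnS (hCL.2 j i iM).
  - have sumn n : \sum_(k < n * M) s k + V n <= Vz.
      elim: n => [|n IH]; first by rewrite mul0n big_ord0 add0r.
      rewrite mulSnr big_split_ord /=.
      have E : \sum_(i < M) s (n * M + i)%N = \sum_(i < M) l (xcl (n * M + i)%N) (ucl n i).
        by apply: eq_bigr => i _; exact: sE.
      rewrite E.
      apply: le_trans IH; rewrite -addrA lerD2l addrC; exact: decr.
    move=> n; apply: le_trans (sumn n); apply: le_trans (ler_wpDr (Vge0 n) (lexx _)).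
    apply: sum_mono; first by move=> k0; have [] := XU k0; exact: l_ge0.
    by rewrite leq_pmulr.
have sdec : forall x u, iX x -> iU u ->
    [/\ qf Q x.1.1 <= l x u, qf Rm (F x u).1.2 <= l x u &
        psi * ((b%:R) ^+ 2 - (x.2%:~R) ^+ 2) <= l x u].
  move=> [[xp us] be] [[uc ga] de] [_ [_ /andP [be0 beb]]] [_ gd].
  rewrite /l (stageE (fp:=fp) (g:=g) (c:=c) (xp, us, be) (uc, ga, de) gd).
  have h1 := qf_ge0 pQ xp.
  have h2 := qf_ge0 pR (F (xp, us, be) (uc, ga, de)).1.2.
  have h3 : 0 <= psi * ((b%:R : R) ^+ 2 - (be%:~R) ^+ 2).
    apply: mulr_ge0; first exact: ltW.
    rewrite subr_ge0 lerXn2r ?nnegrE ?ler0n ?ler0z //.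
    by rewrite -[(b%:R : R)]/((b%:Z)%:~R) ler_int.
  exact: sdec_arith.
have b1 : (1 <= b)%N by apply: leq_trans Hcb; apply: leq_trans Hgc.
have ED : forall eps : R, 0 < eps -> exists2 eta : R, 0 < eta &
   forall xcl ucl, CL xcl ucl -> feas (xcl 0%N) -> forall t,
     l (xcl t) (ucl (t %/ M)%N (t %% M)%N) < eta ->
     l (xcl t.+1) (ucl (t.+1 %/ M)%N (t.+1 %% M)%N) < eta ->
     eq_dist b (xcl t.+1) < eps.
  move=> eps eps0.
  have e30 : 0 < eps / 3 by rewrite divr_gt0.
  have [e1 e10 H1] := qf_small pQ _ e30.
  have [e2 e20 H2] := qf_small pR _ e30.
  exists (Num.min (Num.min e1 e2) psi); first by rewrite !lt_min e10 e20 psi0.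
  move=> xcl ucl hCL f0 t ht ht1.
  have [XU _ Fk _] := facts _ _ hCL f0.
  have [XUt XUt'] := XU t.
  have [XUs XUs'] := XU t.+1.
  have [a1 _ _] := sdec _ _ XUs XUs'.
  have [_ a2 _] := sdec _ _ XUt XUt'.
  have [_ _ a3] := sdec _ _ XUs XUs'.
  move: ht ht1; rewrite !lt_min => /andP [/andP [ht1 ht2] ht3] /andP [/andP [hs1 hs2] hs3].
  have be : (xcl t.+1).2 = b%:Z.
    apply: (@int_eq_b R b _ psi b1 psi0); first by case: XUs => _ [].
    exact: le_lt_trans a3 hs3.
  have n1 := H1 _ (le_lt_trans a1 hs1).
  have n2 := H2 _ (le_lt_trans a2 ht2).
  rewrite -Fk in n2.
  rewrite /eq_dist be subrr normr0 addr0.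
  exact: sum3.
split.
  exact: feas_all.
split.
  move=> eps eps0.
  have [eta eta0 HE] := ED eps eps0.
  have [d1 d10 Hd1] := within_eps cV Xf0 eta eta0.
  have [d2 d20 Hd2] := interior_prod Hint.
  exists (Num.min (Num.min d1 d2) (Num.min 1 eps)); split.
    by rewrite !lt_min d10 d20 eps0 ltr01.
  move=> xcl ucl hCL f0 hd.
  have [XU sb Fk sums] := facts _ _ hCL f0.
  set Vz := ocp_cost F l Vt N (xcl 0%N) (ucl 0%N) in sb.
  move: hd; rewrite /eq_dist !lt_min => hd.
  move: hd => /andP [/andP [h1 h2] /andP [h3 h4]].
  have [x1 _ _] := @lt3 R _ _ _ _ (normr_ge0 _) (normr_ge0 _) (normr_ge0 _) h1.
  have [x2 x3 _] := @lt3 R _ _ _ _ (normr_ge0 _) (normr_ge0 _) (normr_ge0 _) h2.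
  have [_ _ x4] := @lt3 R _ _ _ _ (normr_ge0 _) (normr_ge0 _) (normr_ge0 _) h3.
  have be0 : (xcl 0%N).2 = b%:Z.
    by apply/eqP; rewrite -subr_eq0; apply/eqP; exact: (@int_abs_lt1 R _ x4).
  have [Xf0' Up0'] := Hd2 _ _ x2 x3.
  have Xx0 : iXf (xcl 0%N).
    by split => //; split => //; rewrite be0 lexx andbT.
  have [w [Aw Cw]] := BC (J * r)%N _ Xx0.
  have Aw' : ocp_admissible F iX iU iXf N (xcl 0%N) w by rewrite /N /M mulnA.
  have Cw' : ocp_cost F l Vt N (xcl 0%N) w <= Vt (xcl 0%N) by rewrite /N /M mulnA.
  have Hopt := (hCL.1 0%N f0).2 w Aw'.
  have VtE : Vt (xcl 0%N) = Vfp (xcl 0%N).1.1.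
    by rewrite /Vt /Vf be0 subrr mulr0 addr0.
  have Vsmall : Vfp (xcl 0%N).1.1 < eta.
    have := Hd1 _ Xf0' x1; rewrite V0 subr0 => h.
    exact: le_lt_trans (ler_norm _) h.
  have Vzlt : Vz < eta.
    apply: le_lt_trans Vsmall; rewrite -VtE; apply: le_trans Cw'; exact: Hopt.
  case => [|t].
    exact: h4.
  apply: (HE _ _ hCL f0 t).
    by have [_ h] := sb t; exact: le_lt_trans h Vzlt.
  by have [_ h] := sb t.+1; exact: le_lt_trans h Vzlt.
move=> xcl ucl hCL f0.
have [XU sb Fk sums] := facts _ _ hCL f0.
set Vz := ocp_cost F l Vt N (xcl 0%N) (ucl 0%N) in sb sums.
set s := fun k => l (xcl k) (ucl (k %/ M)%N (k %% M)%N) in sb sums.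
apply/cvgrPdist_lt => e e0.
have [eta eta0 HE] := ED e e0.
have [K HK] : exists K, forall t, (K <= t)%N -> s t < eta.
  case: (pselect (exists K, forall t, (K <= t)%N -> s t < eta)) => // nK.
  exfalso.
  have H : forall K, exists t, (K <= t)%N /\ eta <= s t.
    move=> K; case: (pselect (exists t, (K <= t)%N /\ eta <= s t)) => // hn.
    exfalso; apply: nK; exists K => t Kt; rewrite ltNge; apply/negP => hle.
    by apply: hn; exists t.
  have G : forall m, exists n, m%:R * eta <= \sum_(k < n) s k.
    elim => [|m [n IH]]; first by exists 0%N; rewrite big_ord0 mul0r.
    have [t [nt et]] := H n.
    exists t.+1; rewrite big_ord_recr /= -natr1 mulrDl mul1r.
    apply: lerD; last exact: et.
    apply: (le_trans IH).
    by apply: sum_mono => // k0; have [] := sb k0.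
  have Vz0 : 0 <= Vz by have [h1 h2] := sb 0%N; exact: le_trans h1 h2.
  have [n Hn] := G (Num.Def.archi_bound (Vz / eta)).
  have := archi_boundP (divr_ge0 Vz0 (ltW eta0)).
  rewrite ltr_pdivrMr // => h.
  by have := lt_le_trans h (le_trans Hn (sums n)); rewrite ltxx.
exists K.+1 => // t /= Kt.
case: t Kt => [//|t] Kt.
rewrite sub0r normrN ger0_norm; last first.
  by rewrite /eq_dist; apply: addr_ge0; first apply: addr_ge0.
apply: (HE _ _ hCL f0 t); apply: HK => //.
exact: leq_trans Kt (leqnSn _).
Qed.
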